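(* Suppose the Low-Rank MDP satisfies $\eta$-feature coverage for some $\eta>0$: for all $h\in[H-1]$, $$\sup_{\pi\in\Pi_{\mathrm{M}}}\lambda_{\min}\big(\mathbb{E}^\pi[\phi^\star_h(x_h,a_h)\phi^\star_h(x_h,a_h)^\top]\big)\ge\eta.$$ Then the MDP satisfies $(\eta/2)^{3/2}$-reachability: for all $h\in\{2,\dots,H\}$ and $x\in\mathcal{X}_h$, $\sup_{\pi\in\Pi_{\mathrm{M}}}d^\pi(x)\ge(\eta/2)^{3/2}\|\mu^\star_h(x)\|$.
   Context: Setting (Low-Rank MDP). Fix horizon $H\in\mathbb{N}$, dimension $d\in\mathbb{N}$, a finite action set $\mathcal{A}$ with $|\mathcal{A}|=A$, and a measurable state space $\mathcal{X}=\mathcal{X}_1\sqcup\cdots\sqcup\mathcal{X}_H$ (disjoint layers) carrying a $\sigma$-finite measure $\nu$. The MDP $\mathcal{M}$ has an initial distribution $\rho$ on $\mathcal{X}_1$ and, for each $h\in[H-1]$, measurable maps $\phi^\star_h:\mathcal{X}_h\times\mathcal{A}\to\mathbb{R}^d$ and $\mu^\star_{h+1}:\mathcal{X}_{h+1}\to\mathbb{R}^d$ such that for every $(x,a)\in\mathcal{X}_h\times\mathcal{A}$ the function $x'\mapsto\mu^\star_{h+1}(x')^\top\phi^\star_h(x,a)$ is a probability density w.r.t. $\nu$ on $\mathcal{X}_{h+1}$; this density is the transition kernel $T_h(\cdot\mid x,a)$. $\Pi_{\mathrm{M}}$ denotes the set of randomized Markov policies $\pi:\mathcal{X}\to\Delta(\mathcal{A})$;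 an episode under $\pi$ draws $x_1\sim\rho$, $a_h\sim\pi(x_h)$, $x_{h+1}\sim T_h(\cdot\mid x_h,a_h)$, and $\mathbb{P}^\pi,\mathbb{E}^\pi$ denote the law and expectation of the trajectory. For $h\ge2$ and $x\in\mathcal{X}_h$, $d^\pi(x)$ denotes the density w.r.t. $\nu$ of the law of $x_h$ under $\pi$ (so $d^\pi(x)=\mu^\star_h(x)^\top\mathbb{E}^\pi[\phi^\star_{h-1}(x_{h-1},a_{h-1})]$). Normalization: $\|\phi^\star_h(x,a)\|\le 1$ for all $h,x,a$. Here $\|\cdot\|$ is the Euclidean norm and $\lambda_{\min}$ the smallest eigenvalue. *)

(* Defs.v *)
From HB Require Import structures.
From mathcomp Require Import all_boot all_order all_algebra.
From mathcomp Require Import all_classical all_reals all_analysis.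
Set Implicit Arguments. Unset Strict Implicit. Unset Printing Implicit Defensive.
Import Order.TTheory GRing.Theory Num.Theory.
Import numFieldNormedType.Exports.
Local Open Scope classical_set_scope.
Local Open Scope ring_scope.

Section LowRankMDP.
Context {R : realType} {dT : measure_display} {T : measurableType dT}
        {A : finType} {d : nat}.

Definition dotv (u v : 'rV[R]_d) : R := \sum_(i < d) u 0 i * v 0 i.
Definition enorm (u : 'rV[R]_d) : R := Num.sqrt (dotv u u).

Definition lambda_min (M : 'M[R]_d) : R := inf [set a : R | eigenvalue M a].

Definition is_policy (pi : T -> A -> R) : Prop :=
  [/\ forall x a, 0 <= pi x a,
      forall x, \sum_(a : A) pi x a = 1
    & forall a, measurable_fun setT (fun x => pi x a)].

Variables (rho : probability T R) (nu : {measure set T -> \bar R})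
          (X : nat -> set T)
          (mu : nat -> T -> 'rV[R]_d) (phi : nat -> T -> A -> 'rV[R]_d).

(* transition density T_h(x' | x, a) = mu_{h+1}(x')^T phi_h(x, a) *)
Definition trans (h : nat) (x : T) (a : A) (x' : T) : R :=
  dotv (mu h.+1 x') (phi h x a).

(* Eocc pi k g = E^pi[ g(x_{k+1}, a_{k+1}) ]  (layers are 1-based),
   computed by the Markov property (tower rule):
   E[g(x_1,a_1)] = int rho(dx) sum_a pi(a|x) g(x,a),
   E[g(x_{h+1},a_{h+1})] = E[ int_{X_{h+1}} T_h(x'|x_h,a_h) sum_a' pi(a'|x') g(x',a') nu(dx') ]. *)
Fixpoint Eocc (pi : T -> A -> R) (k : nat) (g : T -> A -> R) : R :=
  match k with
  | 0 => Rintegral rho (X 1) (fun x => \sum_(a : A) pi x a * g x a)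
  | k'.+1 => Eocc pi k' (fun x a =>
       Rintegral nu (X k'.+2)
         (fun x' => trans k'.+1 x a x' * \sum_(a' : A) pi x' a' * g x' a'))
  end.

Definition Expect (pi : T -> A -> R) (h : nat) (g : T -> A -> R) : R :=
  Eocc pi h.-1 g.

Definition covmat (pi : T -> A -> R) (h : nat) : 'M[R]_d :=
  \matrix_(i, j) Expect pi h (fun x a => phi h x a 0 i * phi h x a 0 j).

Definition featmean (pi : T -> A -> R) (h : nat) : 'rV[R]_d :=
  \row_i Expect pi h (fun x a => phi h x a 0 i).

Definition dpi (pi : T -> A -> R) (h : nat) (x : T) : R :=
  dotv (mu h x) (featmean pi h.-1).

End LowRankMDP.

(* Main.v *)
Require Import Defs.
From HB Require Import structures.
From mathcomp Require Import all_boot all_order all_algebra.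
From mathcomp Require Import all_classical all_reals all_analysis.
From mathcomp Require Import ring lra measurable_realfun.
Set Implicit Arguments. Unset Strict Implicit. Unset Printing Implicit Defensive.
Import Order.TTheory GRing.Theory Num.Theory.
Import numFieldNormedType.Exports.
Local Open Scope classical_set_scope.
Local Open Scope ring_scope.
Section Dot.
Context {R : realType} {d : nat}.
Implicit Types (u v w : 'rV[R]_d).

Lemma dotvC u v : dotv u v = dotv v u.
Proof. by apply: eq_bigr => i _; rewrite mulrC. Qed.

Lemma dotvDr u v w : dotv u (v + w) = dotv u v + dotv u w.
Proof. by rewrite /dotv -big_split; apply: eq_bigr => i _; rewrite mxE mulrDr. Qed.

Lemma dotvDl u v w : dotv (v + w) u = dotv v u + dotv w u.
Proof. by rewrite dotvC dotvDr !(dotvC u). Qed.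

Lemma dotvZr a u v : dotv u (a *: v) = a * dotv u v.
Proof. by rewrite /dotv mulr_sumr; apply: eq_bigr => i _; rewrite mxE mulrCA. Qed.

Lemma dotvZl a u v : dotv (a *: v) u = a * dotv v u.
Proof. by rewrite dotvC dotvZr dotvC. Qed.

Lemma dotvNr u v : dotv u (- v) = - dotv u v.
Proof. by rewrite -scaleN1r dotvZr mulN1r. Qed.

Lemma dotvBr u v w : dotv u (v - w) = dotv u v - dotv u w.
Proof. by rewrite dotvDr dotvNr. Qed.

Lemma dotvBl u v w : dotv (v - w) u = dotv v u - dotv w u.
Proof. by rewrite dotvC dotvBr !(dotvC u). Qed.

Lemma dotv0r u : dotv u 0 = 0.
Proof. by rewrite /dotv big1 // => i _; rewrite mxE mulr0. Qed.

Lemma dotv_ge0 u : 0 <= dotv u u.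
Proof. by apply: sumr_ge0 => i _; rewrite -expr2 sqr_ge0. Qed.

Lemma dotv_eq0 u : (dotv u u == 0) = (u == 0).
Proof.
apply/idP/idP => [/eqP H|/eqP ->]; last by rewrite dotv0r.
apply/eqP/rowP => i; rewrite mxE; apply/eqP.
have := H; rewrite /dotv => /eqP; rewrite psumr_eq0 => [/allP /(_ i)|j _];
  last by rewrite -expr2 sqr_ge0.
by rewrite mem_index_enum /= -expr2 sqrf_eq0; apply.
Qed.

Lemma enorm_sqr u : enorm u ^+ 2 = dotv u u.
Proof. by rewrite /enorm sqr_sqrtr // dotv_ge0. Qed.

Lemma enorm_ge0 u : 0 <= enorm u.
Proof. exact: sqrtr_ge0. Qed.

Lemma dotv_CS u v : dotv u v <= enorm u * enorm v.
Proof.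
have [->|u0] := eqVneq u 0.
  by rewrite /dotv big1 ?mulr_ge0 ?enorm_ge0 // => i _; rewrite mxE mul0r.
set a := dotv u u; set b := dotv u v; set c := dotv v v.
have a0 : 0 < a by rewrite lt_neqAle eq_sym dotv_eq0 u0 dotv_ge0.
(* 0 <= dotv (a v - b u) (a v - b u) = a^2 c - 2 a b^2 + b^2 a = a (a c - b^2) *)
have H : 0 <= dotv (a *: v - b *: u) (a *: v - b *: u) by apply: dotv_ge0.
rewrite dotvBl !dotvBr !dotvZl !dotvZr -/a -/c (dotvC v u) -/b in H.
have H2 : b ^+ 2 <= a * c.
  have : 0 <= a * (a * c - b ^+ 2) by rewrite -[X in _ <= X]opprK; nra.
  by rewrite pmulr_rge0 // subr_ge0.
have [b0|b0] := lerP 0 b; last first.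
  by apply: le_trans (ltW b0) _; rewrite mulr_ge0 ?enorm_ge0.
rewrite -(ler_pXn2r (_ : 0 < 2)%N) ?nnegrE ?mulr_ge0 ?enorm_ge0 //.
by rewrite exprMn !enorm_sqr.
Qed.
End Dot.
Section Ray.
Context {R : realType}.

Lemma sum_cont (T : topologicalType) (I : Type) (s : seq I) (F : I -> T -> R) :
  (forall i, continuous (F i)) -> continuous (fun v => \sum_(i <- s) F i v).
Proof.
move=> cF v; elim: s => [|i s IH]; rewrite /continuous_at.

  rewrite big_nil; under eq_fun do rewrite big_nil; exact: cvg_cst.
rewrite big_cons; under eq_fun do rewrite big_cons.
by apply: cvgD => //; apply: cF.
Qed.

Lemma dotv_cont n (f g : 'rV[R]_n -> 'rV[R]_n) : continuous f -> continuous g ->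
  continuous (fun v => dotv (f v) (g v)).
Proof.
move=> cf cg; apply: sum_cont => i.
have h1 : continuous (fun v => f v 0 i).
  by move=> v; apply: (@continuous_comp _ _ _ f (fun M => M 0 i)); [exact: cf | exact: coord_continuous].
have h2 : continuous (fun v => g v 0 i).
  by move=> v; apply: (@continuous_comp _ _ _ g (fun M => M 0 i)); [exact: cg | exact: coord_continuous].
by move=> v; exact: (cvgM (h1 v) (h2 v)).
Qed.
End Ray.
Section Ray2.
Context {R : realType}.

Lemma Q_sym n (C : 'M[R]_n) : C^T = C -> forall u w : 'rV_n,
  dotv u (w *m C) = dotv w (u *m C).
Proof.
move=> trC u w; have Cij : forall i j, C i j = C j i by move=> i j; rewrite -{1}trC mxE.
rewrite /dotv; under eq_bigr do rewrite mxE mulr_sumr.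
under [RHS]eq_bigr do rewrite mxE mulr_sumr.
rewrite exchange_big; apply: eq_bigr => i _; apply: eq_bigr => j _.
by rewrite Cij mulrCA.
Qed.

Lemma QZ n (C : 'M[R]_n) a (u : 'rV_n) :
  dotv (a *: u) ((a *: u) *m C) = a * a * dotv u (u *m C).
Proof. by rewrite -scalemxAl dotvZl dotvZr mulrA. Qed.

Lemma rayleigh n (C : 'M[R]_n) : C^T = C -> forall u : 'rV_n,
  lambda_min C * dotv u u <= dotv u (u *m C).
Proof.
move=> trC; case: n C trC => [|n] C trC u.
  by rewrite /dotv !big_ord0 mulr0.
pose Q (v : 'rV[R]_n.+1) := dotv v (v *m C).
pose S := [set v : 'rV[R]_n.+1 | dotv v v = 1].
have crd : forall i, continuous (fun v : 'rV[R]_n.+1 => v 0 i).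
  by move=> i v; exact: coord_continuous.
have Qc : continuous Q.
  have -> : Q = fun v => \sum_j v 0 j * \sum_i v 0 i * C i j.
    by apply/funext => v; rewrite /Q /dotv; under eq_bigr do rewrite mxE.
  apply: sum_cont => j v; apply: (cvgM (crd j v)).
  apply: sum_cont => i {}v; apply: (cvgM (crd i v)).
  exact: cvg_cst.
have Sc : closed S.
  change (closed ((fun v : 'rV[R]_n.+1 => dotv v v) @^-1` [set 1])).
  apply: preimage_closed; last exact: closed_eq.
  have dc := @dotv_cont R n.+1 id id (fun x => cvg_id) (fun x => cvg_id).
  by move=> v _; exact: dc.
have e1 : forall v : 'rV[R]_n.+1, S v -> forall i, `|v 0 i| <= 1.
  move=> v Sv i; rewrite -(ler_pXn2r (_ : 0 < 2)%N) ?nnegrE // expr1n real_normK ?num_real //.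
  rewrite -Sv /dotv (bigD1 i) //= -expr2 lerDl.
  by apply: sumr_ge0 => k _; rewrite -expr2 sqr_ge0.
have cS : compact S.
  have B := @rV_compact R n.+1 (fun=> `[-1, 1]%classic) (fun=> @segment_compact R (-1) 1).
  apply: (subclosed_compact Sc B).
  move=> v Sv i /=; rewrite in_itv /= -ler_norml; exact: e1.
have S0 : S !=set0.
  exists (\row_i (i == ord0)%:R); rewrite /S /= /dotv (bigD1 ord0) //= !mxE eqxx mulr1.
  by rewrite big1 ?addr0 // => i /negbTE Hi; rewrite !mxE Hi mulr0.
have [c /set_mem Sc' cmin] := EVT_min_rV S0 cS (continuous_subspaceT Qc).
set m := Q c.
have psd : forall v, m * dotv v v <= Q v.
  move=> v; have [->|v0] := eqVneq v 0.
    by rewrite dotv0r mulr0 /Q mul0mx dotv0r.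
  have vv : 0 < dotv v v by rewrite lt_neqAle eq_sym dotv_eq0 v0 dotv_ge0.
  set s := enorm v.
  have s0 : 0 < s by rewrite sqrtr_gt0.
  have St : S (s^-1 *: v).
    rewrite /S /= dotvZl dotvZr -enorm_sqr -/s; field; exact: lt0r_neq0.
  have := cmin _ (mem_set St); rewrite /Q QZ -/(Q v) -/m => H.
  rewrite -enorm_sqr -/s.
  have -> : Q v = s^-1 * s^-1 * Q v * s ^+ 2 by field; rewrite lt0r_neq0.
  by rewrite ler_pM2r ?exprn_gt0.
have cc : dotv c c = 1 by [].
have sym := Q_sym trC.
have ortho : forall w, dotv w (c *m C) - m * dotv w c = 0.
  move=> w; set b := _ - _; set p := Q w - m * dotv w w.
  have p0 : 0 <= p by rewrite subr_ge0 psd.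
  have expand : forall t, Q (c + t *: w) - m * dotv (c + t *: w) (c + t *: w)
      = 2 * t * b + t * t * p.
    move=> t; rewrite /Q mulmxDl -scalemxAl !(dotvDl, dotvDr, dotvZl, dotvZr).
    rewrite (sym c w) (dotvC c w) -/(Q w) -/m cc /b /p.
    rewrite (_ : dotv c (c *m C) = m) //; ring.
  pose e := (p + 1)^-1.
  have e0 : 0 < e by rewrite invr_gt0; lra.
  have ep : e * p < 1.
    rewrite /e mulrC ltr_pdivrMr; last lra.
    by rewrite mul1r; lra.
  have := psd (c + (- e * b) *: w); rewrite -subr_ge0 expand => H.
  have H2 : 0 <= e * (b * b) * (e * p - 2) by rewrite (_ : _ * _ = 2 * (- e * b) * b + - e * b * (- e * b) * p) //; ring.
  have H3 : e * (b * b) * (e * p - 2) <= 0.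
    apply: mulr_ge0_le0; first by apply: mulr_ge0; [exact: ltW | by rewrite -expr2 sqr_ge0].
    lra.
  have : e * (b * b) * (e * p - 2) = 0 by apply/le_anti; rewrite H2 H3.
  move/eqP; rewrite !mulf_eq0 (gt_eqF e0) /= => /orP[/orP[]|] /eqP //.
  by move=> ep2; move: ep; lra.
have eig : c *m C = m *: c.
  apply/eqP; rewrite -subr_eq0 -dotv_eq0; apply/eqP.
  by rewrite -[RHS](ortho (c *m C - m *: c)) dotvBr dotvZr.
have c0 : c != 0 by rewrite -dotv_eq0 cc oner_neq0.
have lb : lbound [set a | eigenvalue C a] m.
  move=> a /eigenvalueP [v vC v0].
  have vv : 0 < dotv v v by rewrite lt_neqAle eq_sym dotv_eq0 v0 dotv_ge0.
  have := psd v; rewrite /Q vC dotvZr.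
  by rewrite ler_pM2r.
have -> : lambda_min C = m.
  apply/le_anti/andP; split.
    apply: (ge_inf (E := [set a | eigenvalue C a])); first by exists m.
    by apply/eigenvalueP; exists c.
  apply: lb_le_inf => //; exists m; by apply/eigenvalueP; exists c.
exact: psd.
Qed.



End Ray2.
Section GenMeas.
Context {R : realType} {dT : measure_display} {T : measurableType dT}.
Variable (m0 : {measure set T -> \bar R}).

Lemma int_density (D : set T) (f : T -> R) : measurable D ->
  measurable_fun D f -> (forall x, D x -> 0 <= f x) ->
  (\int[m0]_(x in D) (f x)%:E = 1)%E ->
  m0.-integrable D (EFin \o f).
Proof.
move=> mD mf f0 f1; apply/integrableP; split; first exact/measurable_EFinP.
rewrite (eq_integral (fun x => (f x)%:E)) ?f1 ?ltry // => x /set_mem Dx.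
by rewrite /= ger0_norm ?f0.
Qed.

Lemma int_boundedM (D : set T) (t F : T -> R) (M : R) : measurable D ->
  measurable_fun D t -> measurable_fun D F ->
  m0.-integrable D (EFin \o t) -> (forall x, D x -> 0 <= t x) ->
  (forall x, D x -> `|F x| <= M) ->
  m0.-integrable D (EFin \o (fun x => t x * F x)).
Proof.
move=> mD mt mF it t0 FM.
apply: (@le_integrable _ _ _ _ _ mD _ (EFin \o (fun x => M * t x))) => //.
- by apply/measurable_EFinP; exact: measurable_funM.
- move=> x Dx /=; rewrite lee_fin.
  have M0 : 0 <= M by apply: le_trans (FM _ Dx).
  by rewrite !normrM (ger0_norm M0) (ger0_norm (t0 _ Dx)) mulrC ler_wpM2r ?t0 ?FM.
- have -> : EFin \o (fun x => M * t x) = (fun x => M%:E * (EFin \o t) x)%E.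
    by apply/funext => x; rewrite /= EFinM.
  exact: integrableZl.
Qed.

Lemma Rint_boundedM (D : set T) (t F : T -> R) (M : R) : measurable D ->
  measurable_fun D t -> measurable_fun D F ->
  m0.-integrable D (EFin \o t) -> (forall x, D x -> 0 <= t x) ->
  (forall x, D x -> `|F x| <= M) ->
  `| Rintegral m0 D (fun x => t x * F x) | <= M * Rintegral m0 D t.
Proof.
move=> mD mt mF it t0 FM.
have M0 : forall x, D x -> 0 <= M by move=> x Dx; apply: le_trans (FM _ Dx).
apply: le_trans (le_normr_Rintegral mD (int_boundedM mD mt mF it t0 FM)) _.
rewrite -RintegralZl //; apply: le_Rintegral => //.
- have mFa : measurable_fun D (fun x => `|F x|) by apply: measurableT_comp.
  have FMa : forall x, D x -> `| `|F x| | <= M by move=> x Dx; rewrite normr_id FM.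
  apply: (eq_integrable mD _ _ _ (int_boundedM mD mt mFa it t0 FMa)).
  by move=> x /set_mem Dx /=; rewrite normrM (ger0_norm (t0 _ Dx)).
- have -> : EFin \o (fun x => M * t x) = (fun x => M%:E * (EFin \o t) x)%E.
    by apply/funext => x; rewrite /= EFinM.
  exact: integrableZl.
- move=> x Dx; rewrite normrM (ger0_norm (t0 _ Dx)) mulrC ler_wpM2r ?t0 ?FM //.
Qed.
End GenMeas.
Section Span.
Context {R : realType}.

Lemma span_rep n (S : set 'rV[R]_n) (I : 'rV[R]_n -> R) :
  (forall m (B : 'M[R]_(m, n)) (c : 'rV[R]_m), (forall j, S (row j B)) ->
     I (c *m B) = \sum_j c 0 j * I (row j B)) ->
  exists w : 'rV[R]_n, forall v, S v -> I v = dotv v w.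
Proof.
move=> Ilin.
pose P r := exists m (B : 'M[R]_(m, n)), (forall j, S (row j B)) /\ \rank B = r.
have exP : exists r, `[< P r >].
  exists 0%N; apply/asboolP; exists 0%N, 0; split; first by case.
  by rewrite mxrank0.
have ubP : forall r, `[< P r >] -> (r <= n)%N.
  by move=> r /asboolP [m [B [_ <-]]]; exact: rank_leq_col.
case: (ex_maxnP exP ubP) => r0 /asboolP [m [B [SB rB]]] maxr.
have sub : forall v, S v -> (v <= B)%MS.
  move=> v Sv.
  have PB' : `[< P (\rank (col_mx B v)) >].
    apply/asboolP; exists (m + 1)%N, (col_mx B v); split => // j.
    rewrite -(splitK j); case: (fintype.split j) => k /=.
      by rewrite rowKu.
    rewrite rowKd (ord1 k).
    by have -> : row 0 v = v by apply/rowP => i; rewrite mxE.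
  have le1 := maxr _ PB'.
  have sBv : (B <= (B + v))%MS by exact: addsmxSl.
  have rk : \rank (B + v)%MS = \rank (col_mx B v) by rewrite addsmxE.
  have := mxrank_leqif_sup sBv.
  move=> [_]; rewrite rk rB eqn_leq le1.
  rewrite -rB -rk mxrankS //= => /esym H.
  by apply: submx_trans (addsmxSr B v) H.
pose iv : 'cV[R]_m := \col_j I (row j B).
exists (pinvmx B *m iv)^T => v Sv.
rewrite -{1}(mulmxKpV (sub v Sv)) Ilin //.
rewrite /dotv; under [RHS]eq_bigr do rewrite mxE.
transitivity (((v *m pinvmx B) *m iv) 0 0).
  by rewrite mxE; apply: eq_bigr => j _; rewrite [iv j 0]mxE.
by rewrite -mulmxA mxE.
Qed.

End Span.
Section RintSum.
Context {R : realType} {dT : measure_display} {T : measurableType dT}.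
Variable (m0 : {measure set T -> \bar R}).

Lemma Rintegral_sum (I : Type) (s : seq I) (D : set T) (f : I -> T -> R) :
  measurable D -> (forall i, m0.-integrable D (EFin \o f i)) ->
  m0.-integrable D (EFin \o (fun x => \sum_(i <- s) f i x)) /\
  Rintegral m0 D (fun x => \sum_(i <- s) f i x) = \sum_(i <- s) Rintegral m0 D (f i).
Proof.
move=> mD fi; elim: s => [|i s [IHi IHe]].
  under eq_fun do rewrite big_nil; rewrite big_nil; split.
    have -> : EFin \o (fun _ : T => (0:R)) = cst 0%E by [].
    exact: integrable0.
  by rewrite Rintegral_cst // mul0r.
have eqf : EFin \o (fun x => \sum_(j <- i :: s) f j x) =
    (EFin \o f i) \+ (EFin \o (fun x => \sum_(j <- s) f j x)).
  by apply/funext => x; rewrite /= big_cons.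
split; first by rewrite eqf; exact: integrableD.
under eq_fun do rewrite big_cons; rewrite big_cons.
by rewrite RintegralD // IHe.
Qed.
End RintSum.
Section Occ.
Context {R : realType} {dT : measure_display} {T : measurableType dT}
        {A : finType} {d : nat}.
Variables (rho : probability T R) (nu : {measure set T -> \bar R})
          (X : nat -> set T)
          (mu : nat -> T -> 'rV[R]_d) (phi : nat -> T -> A -> 'rV[R]_d) (H : nat).
Hypothesis HXm : forall h, (1 <= h <= H)%N -> measurable (X h).
Hypothesis Hrho : rho (X 1) = 1%E.
Hypothesis Hphim : forall h a (i : 'I_d), (1 <= h <= H - 1)%N ->
             measurable_fun (X h) (fun x => phi h x a 0 i).
Hypothesis Hmum : forall h (i : 'I_d), (2 <= h <= H)%N ->
             measurable_fun (X h) (fun x => mu h x 0 i).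
Hypothesis Hdens_pos : forall h x a x', (1 <= h <= H - 1)%N -> X h x -> X h.+1 x' ->
             0 <= trans mu phi h x a x'.
Hypothesis Hdens_int : forall h x a, (1 <= h <= H - 1)%N -> X h x ->
             (\int[nu]_(x' in X h.+1) (trans mu phi h x a x')%:E = 1)%E.
Variable pi : T -> A -> R.
Hypothesis hpi : is_policy pi.

Local Notation E := (Eocc rho nu X mu phi pi).

Definition Good j (g : T -> A -> R) :=
  (forall a, measurable_fun (X j.+1) (fun x => g x a)) /\
  (exists M, forall x a, X j.+1 x -> `|g x a| <= M).

Definition Fsum (g : T -> A -> R) x := \sum_(a : A) pi x a * g x a.

Lemma pi_ge0 x a : 0 <= pi x a. Proof. by case: hpi. Qed.
Lemma pi_sum x : \sum_(a : A) pi x a = 1. Proof. by case: hpi. Qed.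
Lemma pi_meas a D : measurable D -> measurable_fun D (fun x => pi x a).
Proof. by case: hpi => _ _ /(_ a) pm mD; apply: measurable_funS pm. Qed.

Lemma Fsum_meas j g : measurable (X j.+1) -> Good j g -> measurable_fun (X j.+1) (Fsum g).
Proof.
move=> mX [gm _]; apply: measurable_sum => a.
by apply: measurable_funM; [exact: pi_meas | exact: gm].
Qed.

Lemma Fsum_bound (D : set T) g M : (forall x a, D x -> `|g x a| <= M) ->
  forall x, D x -> `|Fsum g x| <= M.
Proof.
move=> gM x Dx; apply: le_trans (ler_norm_sum _ _ _) _.
apply: le_trans (_ : \sum_(a : A) pi x a * M <= M).
  apply: ler_sum => a _; rewrite normrM ger0_norm ?pi_ge0 //.
  by rewrite ler_wpM2l ?pi_ge0 ?gM.
by rewrite -mulr_suml pi_sum mul1r.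
Qed.

Lemma Fsum_lin g1 g2 (c1 c2 : R) x :
  Fsum (fun x a => c1 * g1 x a + c2 * g2 x a) x = c1 * Fsum g1 x + c2 * Fsum g2 x.
Proof.
rewrite /Fsum !mulr_sumr -big_split; apply: eq_bigr => a _ /=.
ring.
Qed.

Lemma Fsum_ge0 (D : set T) g : (forall x a, D x -> 0 <= g x a) ->
  forall x, D x -> 0 <= Fsum g x.
Proof. by move=> g0 x Dx; apply: sumr_ge0 => a _; rewrite mulr_ge0 ?pi_ge0 ?g0. Qed.

Lemma Fsum_one x : Fsum (fun _ _ => 1) x = 1.
Proof. by rewrite /Fsum; under eq_bigr do rewrite mulr1; exact: pi_sum. Qed.

Lemma Eocc_ext j g1 g2 : (forall x a, X j.+1 x -> g1 x a = g2 x a) -> E j g1 = E j g2.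
Proof.
elim: j g1 g2 => [|j IH] g1 g2 eqg /=.
  by apply: eq_Rintegral => x /set_mem Xx; apply: eq_bigr => a _; rewrite eqg.
apply: IH => x a _; apply: eq_Rintegral => y /set_mem Xy.
by congr (_ * _); apply: eq_bigr => b _; rewrite eqg.
Qed.

Definition Phi j (g : T -> A -> R) x a :=
  Rintegral nu (X j.+2) (fun x' => trans mu phi j.+1 x a x' * Fsum g x').

Lemma EoccS j g : E j.+1 g = E j (Phi j g).
Proof. by []. Qed.

Section Layer.
Variable j : nat.
Hypothesis hj : (j.+1 <= H - 1)%N.

Let mX1 : measurable (X j.+1).
Proof. by apply: HXm; apply/andP; split => //; apply: leq_trans hj (leq_subr _ _). Qed.
Let mX2 : measurable (X j.+2).
Proof.
apply: HXm; apply/andP; split => //.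
by move: hj; case: H => //= H'; rewrite subn1 /=.
Qed.
Let hj1 : (1 <= j.+1 <= H - 1)%N. Proof. by rewrite hj. Qed.
Let hj2 : (2 <= j.+2 <= H)%N.
Proof. by move: hj; case: H => //= H'; rewrite subn1 /=. Qed.

Lemma dotv_meas (D : set T) (f : T -> 'rV[R]_d) (v : 'rV[R]_d) :
  (forall i, measurable_fun D (fun x => f x 0 i)) ->
  measurable_fun D (fun x => dotv (f x) v).
Proof.
move=> fm; apply: measurable_sum => i.
by apply: measurable_funM => //; exact: measurable_cst.
Qed.

Lemma dotv_meas' (D : set T) (f : T -> 'rV[R]_d) (v : 'rV[R]_d) :
  (forall i, measurable_fun D (fun x => f x 0 i)) ->
  measurable_fun D (fun x => dotv v (f x)).
Proof.
move=> fm; apply: measurable_sum => i.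
by apply: measurable_funM => //; exact: measurable_cst.
Qed.

Lemma tau_meas x a : measurable_fun (X j.+2) (fun x' => trans mu phi j.+1 x a x').
Proof. by apply: dotv_meas => i; apply: Hmum. Qed.

Lemma tau_int x a : X j.+1 x ->
  nu.-integrable (X j.+2) (EFin \o (fun x' => trans mu phi j.+1 x a x')).
Proof.
move=> Xx; apply: int_density => //; first exact: tau_meas.
  by move=> y Xy; apply: Hdens_pos.
exact: Hdens_int.
Qed.

Lemma tau_one x a : X j.+1 x ->
  Rintegral nu (X j.+2) (fun x' => trans mu phi j.+1 x a x') = 1.
Proof. by move=> Xx; rewrite /Rintegral Hdens_int. Qed.

Lemma Phi_int g x a : Good j.+1 g -> X j.+1 x ->
  nu.-integrable (X j.+2) (EFin \o (fun x' => trans mu phi j.+1 x a x' * Fsum g x')).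
Proof.
move=> [gm [M gM]] Xx.
exact: (int_boundedM mX2 (tau_meas x a) (Fsum_meas mX2 (conj gm (ex_intro _ M gM)))
  (tau_int a Xx) (fun y Xy => Hdens_pos a hj1 Xx Xy) (Fsum_bound gM)).
Qed.

Lemma Phi_bound g M x a : Good j.+1 g -> (forall x a, X j.+2 x -> `|g x a| <= M) ->
  X j.+1 x -> `|Phi j g x a| <= M.
Proof.
move=> [gm gb] gM Xx; rewrite /Phi.
have := Rint_boundedM mX2 (tau_meas x a) (Fsum_meas mX2 (conj gm gb)) (tau_int a Xx)
  (fun y Xy => Hdens_pos a hj1 Xx Xy) (Fsum_bound gM).
by rewrite tau_one // mulr1.
Qed.

Lemma intZ (m0 : {measure set T -> \bar R}) (D : set T) (f : T -> R) (c : R) :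
  measurable D -> m0.-integrable D (EFin \o f) ->
  m0.-integrable D (EFin \o (fun x => c * f x)).
Proof.
move=> mD fi; apply: (eq_integrable mD _ _ _ (integrableZl mD c fi)).
by move=> y _; rewrite /= EFinM.
Qed.

Lemma Phi_lin g1 g2 (c1 c2 : R) x a : Good j.+1 g1 -> Good j.+1 g2 -> X j.+1 x ->
  Phi j (fun x a => c1 * g1 x a + c2 * g2 x a) x a = c1 * Phi j g1 x a + c2 * Phi j g2 x a.
Proof.
move=> G1 G2 Xx; rewrite /Phi.
under eq_Rintegral do rewrite Fsum_lin mulrDr (mulrCA _ c1) (mulrCA _ c2).
rewrite RintegralD //; last 2 first.
- exact: intZ mX2 (Phi_int a G1 Xx).
- exact: intZ mX2 (Phi_int a G2 Xx).
by rewrite !RintegralZl //; [exact: Phi_int | exact: Phi_int].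
Qed.

Lemma Phi_ge0 g x a : (forall x a, X j.+2 x -> 0 <= g x a) -> X j.+1 x -> 0 <= Phi j g x a.
Proof.
move=> g0 Xx; apply: Rintegral_ge0 => y Xy.
by rewrite mulr_ge0 ?(Hdens_pos a hj1 Xx Xy) ?(Fsum_ge0 g0).
Qed.

Lemma Phi_one x a : X j.+1 x -> Phi j (fun _ _ => 1) x a = 1.
Proof.
move=> Xx; rewrite /Phi; under eq_Rintegral do rewrite Fsum_one mulr1.
exact: tau_one.
Qed.

Lemma dotv_sumr (u : 'rV[R]_d) (I : Type) (s : seq I) (f : I -> 'rV[R]_d) :
  dotv u (\sum_(k <- s) f k) = \sum_(k <- s) dotv u (f k).
Proof. by elim: s => [|k s IH]; rewrite ?big_nil ?dotv0r // !big_cons dotvDr IH. Qed.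

Lemma Phi_meas g a : Good j.+1 g -> measurable_fun (X j.+1) (fun x => Phi j g x a).
Proof.
move=> G.
pose S := [set v | exists2 y, X j.+1 y & v = phi j.+1 y a].
pose I (v : 'rV[R]_d) := Rintegral nu (X j.+2) (fun x' => dotv (mu j.+2 x') v * Fsum g x').
have intS : forall v, S v -> nu.-integrable (X j.+2)
    (EFin \o (fun x' => dotv (mu j.+2 x') v * Fsum g x')).
  by move=> v [y Xy ->]; exact: (Phi_int a G Xy).
have [w Iw] : exists w, forall v, S v -> I v = dotv v w.
  apply: span_rep => m B c SB; rewrite /I.
  have eqf : forall x', dotv (mu j.+2 x') (c *m B) * Fsum g x' =
      \sum_k c 0 k * (dotv (mu j.+2 x') (row k B) * Fsum g x').
    move=> x'; move: (Fsum g x') => F.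
    rewrite mulmx_sum_row dotv_sumr mulr_suml; apply: eq_bigr => k _.
    by rewrite dotvZr mulrA.
  under eq_Rintegral do rewrite eqf.
  have [_ ->] := Rintegral_sum (index_enum 'I_m) mX2
    (fun k => intZ (c 0 k) mX2 (intS _ (SB k))).
  by apply: eq_bigr => k _; rewrite RintegralZl //; exact: intS.
apply: (eq_measurable_fun (fun x => dotv (phi j.+1 x a) w)).
  by move=> x /set_mem Xx; rewrite -Iw //; exists x.
by apply: dotv_meas => i; apply: Hphim.
Qed.

Lemma Phi_good g : Good j.+1 g -> Good j (Phi j g).
Proof.
move=> G; split; first by move=> a; exact: Phi_meas.
case: (G) => _ [M gM]; exists M => x a Xx; exact: Phi_bound.
Qed.

End Layer.
Lemma int_rho g : measurable (X 1) -> Good 0 g -> rho.-integrable (X 1) (EFin \o Fsum g).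
Proof.
move=> mX [gm [M gM]].
apply: (@le_integrable _ _ _ _ _ mX _ (EFin \o cst M)).
- by apply/measurable_EFinP; exact: (Fsum_meas mX (conj gm (ex_intro _ M gM))).
- move=> x Xx /=; rewrite lee_fin (le_trans (Fsum_bound gM Xx)) //.
  by rewrite ler_norm.
- exact: finite_measure_integrable_cst.
Qed.

Lemma Eocc_props j : (j.+1 <= H - 1)%N ->
  [/\ forall g1 g2 (c1 c2 : R), Good j g1 -> Good j g2 ->
        E j (fun x a => c1 * g1 x a + c2 * g2 x a) = c1 * E j g1 + c2 * E j g2,
      forall g, Good j g -> (forall x a, X j.+1 x -> 0 <= g x a) -> 0 <= E j g
    & E j (fun _ _ => 1) = 1].
Proof.
elim: j => [|j IH] hj.
  have mX : measurable (X 1).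
    by apply: HXm; rewrite /= (leq_trans hj) // leq_subr.
  split.
  - move=> g1 g2 c1 c2 G1 G2 /=.
    rewrite (eq_Rintegral _ (fun x _ => Fsum_lin g1 g2 c1 c2 x)).
    rewrite RintegralD //; try exact: intZ (int_rho mX _).
    by rewrite !RintegralZl //; exact: int_rho.
  - move=> g G g0 /=; apply: Rintegral_ge0; exact: Fsum_ge0.
  - rewrite /= (eq_Rintegral _ (fun x _ => Fsum_one x)).
    rewrite Rintegral_cst // mul1r.
    exact: (congr1 fine Hrho).
have hj' : (j.+1 <= H - 1)%N by apply: ltnW.
have [lin0 pos0 one0] := IH hj'.
split.
- move=> g1 g2 c1 c2 G1 G2; rewrite !EoccS.
  rewrite (@Eocc_ext j _ (fun x a => c1 * Phi j g1 x a + c2 * Phi j g2 x a)).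
    by rewrite lin0 //; exact: Phi_good.
  by move=> x a Xx; rewrite Phi_lin.
- move=> g G g0; rewrite EoccS; apply: pos0; first exact: Phi_good.
  by move=> x a Xx; apply: Phi_ge0.
- rewrite EoccS (@Eocc_ext j _ (fun _ _ => 1)) //.
  by move=> x a Xx; rewrite Phi_one.
Qed.


Lemma Good_cst j (c : R) : Good j (fun _ _ => c).
Proof. by split; [move=> a; exact: measurable_cst | exists `|c|]. Qed.

Lemma Good_lin j g1 g2 (c1 c2 : R) : Good j g1 -> Good j g2 ->
  Good j (fun x a => c1 * g1 x a + c2 * g2 x a).
Proof.
move=> [m1 [M1 b1]] [m2 [M2 b2]]; split.
  move=> a; apply: measurable_funD; apply: measurable_funM => //;
    exact: measurable_cst.
exists (`|c1| * M1 + `|c2| * M2) => x a Xx.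
apply: le_trans (ler_normD _ _) _; rewrite !normrM.
by apply: lerD; apply: ler_wpM2l => //; [exact: b1 | exact: b2].
Qed.

Lemma Good_mul j g1 g2 : Good j g1 -> Good j g2 -> Good j (fun x a => g1 x a * g2 x a).
Proof.
move=> [m1 [M1 b1]] [m2 [M2 b2]]; split.
  by move=> a; apply: measurable_funM.
exists (M1 * M2) => x a Xx; rewrite normrM.
by apply: ler_pM => //; [exact: b1 | exact: b2].
Qed.

Lemma Good_sum j (I : Type) (s : seq I) (c : I -> R) (g : I -> T -> A -> R) :
  (forall i, Good j (g i)) -> Good j (fun x a => \sum_(i <- s) c i * g i x a).
Proof.
move=> G; elim: s => [|i s IH].
  have -> : (fun x a => \sum_(i <- [::]) c i * g i x a) = (fun _ _ => 0).
    by apply/funext => x; apply/funext => a; rewrite big_nil.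
  exact: Good_cst.
have -> : (fun x a => \sum_(k <- i :: s) c k * g k x a) =
    (fun x a => c i * g i x a + 1 * \sum_(k <- s) c k * g k x a).
  by apply/funext => x; apply/funext => a; rewrite big_cons mul1r.
exact: Good_lin.
Qed.

Lemma Eocc_sum j (I : Type) (s : seq I) (c : I -> R) (g : I -> T -> A -> R) :
  (j.+1 <= H - 1)%N -> (forall i, Good j (g i)) ->
  E j (fun x a => \sum_(i <- s) c i * g i x a) = \sum_(i <- s) c i * E j (g i).
Proof.
move=> hj G; have [lin _ _] := Eocc_props hj.
elim: s => [|i s IH].
  have -> : (fun x a => \sum_(i <- [::]) c i * g i x a) =
      (fun x a => 0 * (fun _ _ => (0:R)) x a + 0 * (fun _ _ => (0:R)) x a).
    by apply/funext => x; apply/funext => a; rewrite big_nil !mul0r addr0.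
  by rewrite lin ?big_nil ?mul0r ?addr0 //; exact: Good_cst.
have -> : (fun x a => \sum_(k <- i :: s) c k * g k x a) =
    (fun x a => c i * g i x a + 1 * (fun x a => \sum_(k <- s) c k * g k x a) x a).
  by apply/funext => x; apply/funext => a; rewrite big_cons mul1r.
by rewrite lin ?IH ?big_cons ?mul1r //; exact: Good_sum.
Qed.


Hypothesis Hphin : forall h x a, (1 <= h <= H - 1)%N -> X h x -> enorm (phi h x a) <= 1.

Lemma coord_le_enorm (v : 'rV[R]_d) i : `|v 0 i| <= enorm v.
Proof.
rewrite -(ler_pXn2r (_ : 0 < 2)%N) ?nnegrE ?enorm_ge0 // enorm_sqr real_normK ?num_real //.
rewrite /dotv (bigD1 i) //= -expr2 lerDl.
by apply: sumr_ge0 => k _; rewrite -expr2 sqr_ge0.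
Qed.

Lemma key h x : (2 <= h <= H)%N -> X h x ->
  lambda_min (covmat rho nu X mu phi pi h.-1) * dotv (mu h x) (mu h x)
    <= enorm (mu h x) * dpi rho nu X mu phi pi h x
  /\ dpi rho nu X mu phi pi h x <= enorm (mu h x).
Proof.
move=> /andP[h2 hH] Xhx.
set k := h.-1; set j := h.-2; set u := mu h x.
have jk : j.+1 = k by rewrite /j /k; case: h h2 {hH Xhx u k j} => [|[|h]].
have hk : (1 <= k <= H - 1)%N.
  rewrite /k; case: h h2 hH {Xhx u k j jk} => [|[|h]] //= _ hH.
  by rewrite subn1 /=; move: hH; case: H.
have hj : (j.+1 <= H - 1)%N by rewrite jk; case/andP: hk.
have [lin pos one] := Eocc_props hj.
have Ek : forall g, Expect rho nu X mu phi pi k g = E j g by [].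
pose gi (i : 'I_d) := fun y a => phi k y a 0 i.
have Ggi : forall i, Good j (gi i).
  move=> i; split; first by move=> a; rewrite jk; exact: Hphim.
  exists 1 => y a; rewrite jk => Xy.
  by apply: le_trans (coord_le_enorm _ _) (Hphin _ hk Xy).
pose gu := fun y a => \sum_i u 0 i * gi i y a.
have Ggu : Good j gu by exact: Good_sum.
have kS : k.+1 = h by rewrite /k prednK // (leq_trans _ h2).
have Xkx : X k.+1 x by rewrite kS.
have gu_ge0 : forall y a, X j.+1 y -> 0 <= gu y a.
  rewrite jk => y a Xy.
  have := Hdens_pos a hk Xy Xkx; rewrite /trans kS.
  by [].
have gu_le : forall y a, X j.+1 y -> gu y a <= enorm u.
  rewrite jk => y a Xy; rewrite (_ : gu y a = dotv u (phi k y a)) //.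
  apply: le_trans (dotv_CS u (phi k y a)) _.
  by rewrite ler_piMr ?enorm_ge0 // Hphin.
have dE : dpi rho nu X mu phi pi h x = E j gu.
  rewrite /dpi /gu Eocc_sum //= /dotv; apply: eq_bigr => i _.
  by rewrite mxE.
set C := covmat rho nu X mu phi pi k.
have Cil : forall i l, C i l = E j (fun y a => gi i y a * gi l y a) by move=> i l; rewrite mxE.
have Csym : C^T = C.
  apply/matrixP => i l; rewrite mxE !Cil; congr (E j _).
  by apply/funext => y; apply/funext => a; rewrite mulrC.
have Ggg : forall i l, Good j (fun y a => gi i y a * gi l y a) by move=> i l; exact: Good_mul.
have QE : dotv u (u *m C) = E j (fun y a => gu y a * gu y a).
  transitivity (\sum_l u 0 l * E j (fun y a => \sum_i u 0 i * (gi i y a * gi l y a))).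
    rewrite /dotv; apply: eq_bigr => l _; rewrite mxE Eocc_sum //; congr (_ * _).
    by apply: eq_bigr => i _; rewrite Cil.
  rewrite -Eocc_sum //; last by move=> l; exact: Good_sum.
  congr (E j _); apply/funext => y; apply/funext => a.
  rewrite /gu mulr_suml; apply: eq_bigr => l _.
  rewrite mulr_sumr [RHS]mulr_sumr; apply: eq_bigr => i _; ring.
have Qle : E j (fun y a => gu y a * gu y a) <= enorm u * E j gu.
  have := pos _ (Good_lin (enorm u) (-1) Ggu (Good_mul Ggu Ggu)).
  rewrite lin //; last exact: Good_mul.
  rewrite mulN1r subr_ge0; apply.
  by move=> y a Xy; rewrite mulN1r subr_ge0 ler_wpM2r ?gu_ge0 ?gu_le.
have dle : E j gu <= enorm u.
  have := pos _ (Good_lin (enorm u) (-1) (Good_cst j 1) Ggu).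
  rewrite lin //; last exact: Good_cst.
  rewrite mulN1r subr_ge0 one mulr1; apply.
  by move=> y a Xy /=; rewrite mulN1r subr_ge0 gu_le.
rewrite dE; split => //.
by apply: le_trans (rayleigh Csym u) _; rewrite QE.
Qed.

End Occ.
Unset Implicit Arguments.
Theorem mainTheorem8
  (R : realType) (H d : nat) (A : finType)
  (dT : measure_display) (T : measurableType dT)
  (nu : {measure set T -> \bar R}) (X : nat -> set T)
  (rho : probability T R)
  (mu : nat -> T -> 'rV[R]_d) (phi : nat -> T -> A -> 'rV[R]_d)
  (eta : R)
  (* state space: sigma-finite measure, disjoint measurable layers X_1..X_H *)
  (Hnu : sigma_finite setT nu)
  (HXm : forall h, (1 <= h <= H)%N -> measurable (X h))
  (HXdisj : forall h h', (1 <= h <= H)%N -> (1 <= h' <= H)%N -> h <> h' ->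
              X h `&` X h' = set0)
  (HXcov : forall x : T, exists2 h, (1 <= h <= H)%N & X h x)
  (* initial distribution on X_1 *)
  (Hrho : rho (X 1) = 1%E)
  (* measurability of the features *)
  (Hphim : forall h a (i : 'I_d), (1 <= h <= H - 1)%N ->
             measurable_fun (X h) (fun x => phi h x a 0 i))
  (Hmum : forall h (i : 'I_d), (2 <= h <= H)%N ->
             measurable_fun (X h) (fun x => mu h x 0 i))
  (* x' |-> mu_{h+1}(x')^T phi_h(x,a) is a probability density on X_{h+1} *)
  (Hdens_pos : forall h x a x', (1 <= h <= H - 1)%N -> X h x -> X h.+1 x' ->
             0 <= trans mu phi h x a x')
  (Hdens_int : forall h x a, (1 <= h <= H - 1)%N -> X h x ->
             (\int[nu]_(x' in X h.+1) (trans mu phi h x a x')%:E = 1)%E)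
  (* normalization ||phi_h(x,a)|| <= 1 *)
  (Hphin : forall h x a, (1 <= h <= H - 1)%N -> X h x -> enorm (phi h x a) <= 1)
  (* eta-feature coverage *)
  (Heta : 0 < eta)
  (Hcov : forall h, (1 <= h <= H - 1)%N ->
     (ereal_sup [set (lambda_min (covmat rho nu X mu phi pi h))%:E
                 | pi in is_policy] >= eta%:E)%E) :
  (* (eta/2)^{3/2}-reachability *)
  forall h x, (2 <= h <= H)%N -> X h x ->
    (ereal_sup [set (dpi rho nu X mu phi pi h x)%:E | pi in is_policy]
       >= (((eta / 2) `^ (3 / 2)) * enorm (mu h x))%:E)%E.
Proof.
move=> h x hh Xhx.
have K := fun pi hpi => key HXm Hrho Hphim Hmum Hdens_pos Hdens_int (pi := pi) hpi Hphin hh Xhx.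
case/andP: hh => h2 hH.
set k := h.-1.
have hk : (1 <= k <= H - 1)%N.
  rewrite /k; case: h h2 hH {Xhx K k} => [|[|h]] //= _ hH.
  by rewrite ltn_subRL add1n.
have Hc := Hcov k hk.
pose L := [set (lambda_min (covmat rho nu X mu phi pi k))%:E | pi in is_policy].
have Hc' : (eta%:E <= ereal_sup L)%E by exact: Hc.
clear Hc; rename Hc' into Hc.
pose D := [set (dpi rho nu X mu phi pi h x)%:E | pi in is_policy].
suff : (((eta / 2) `^ (3 / 2) * enorm (mu h x))%:E <= ereal_sup D)%E by [].
have [pi0 hpi0] : exists pi : T -> A -> R, is_policy pi.
  apply: contrapT => npi.
  have L0 : L = set0.
    by apply/seteqP; split => // y [pi hpi _]; apply: npi; exists pi.
  by move: Hc; rewrite L0 ereal_sup0 leNgt ltNye.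
set u := mu h x.
have [u0|u0] := eqVneq u 0.
  have Dsup : ((dpi rho nu X mu phi pi0 h x)%:E <= ereal_sup D)%E.
    by apply: ereal_sup_ubound; exists pi0.
  apply: le_trans Dsup; rewrite lee_fin /dpi -/u u0 dotvC dotv0r.
  by rewrite /enorm dotv0r sqrtr0 mulr0.
have nu0 : 0 < enorm u.
  by rewrite sqrtr_gt0 lt_neqAle eq_sym dotv_eq0 u0 dotv_ge0.
have Kl : forall pi, is_policy pi ->
    lambda_min (covmat rho nu X mu phi pi k) * enorm u <= dpi rho nu X mu phi pi h x.
  move=> pi hpi; have [K1 _] := K pi hpi.
  rewrite -(ler_pM2l nu0) mulrCA; apply: le_trans K1.
  by rewrite -enorm_sqr expr2.
have K1 : forall pi, is_policy pi -> lambda_min (covmat rho nu X mu phi pi k) <= 1.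
  move=> pi hpi; have [_ K2] := K pi hpi.
  rewrite -(ler_pM2r nu0) mul1r; apply: le_trans (Kl _ hpi) K2.
have eta1 : eta <= 1.
  rewrite -lee_fin; apply: le_trans Hc _; apply: ge_ereal_sup.
  by move=> y [pi hpi <-]; rewrite lee_fin K1.
set c := (eta / 2) `^ (3 / 2).
have ceta : c < eta.
  apply: le_lt_trans (_ : eta / 2 < eta); last lra.
  apply: ge1r_powR; last lra.
  by apply/andP; split; lra.
have : (c%:E < ereal_sup L)%E by apply: lt_le_trans Hc; rewrite lte_fin.
case/ereal_sup_gt => y [pi hpi <-]; rewrite lte_fin => cl.
apply: le_trans (_ : (dpi rho nu X mu phi pi h x)%:E <= _)%E; last first.
  by apply: ereal_sup_ubound; exists pi.
rewrite lee_fin; apply: le_trans (Kl _ hpi).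
by rewrite ler_pM2r // ltW.
Qed.
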